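(* For the SVIQS system, assume $\omega\ge\eta=\gamma$. If $R_0<1$, then the disease-free equilibrium $E^0$ is globally asymptotically stable: it is Lyapunov stable, and every solution with initial data satisfying $S_k(0),V_k(0),I_k(0),Q_k(0)\ge0$ and $S_k(0)+V_k(0)+I_k(0)+Q_k(0)=N_k^*$ for all $k$ converges to $E^0$ as $t\to\infty$.
   Context: Fix an integer $n\ge1$ and numbers $p(1),\dots,p(n)>0$ with $\sum_{k=1}^n p(k)=1$; set $\langle k\rangle=\sum_{k=1}^n kp(k)$. Fix constants $b>d>0$ and let $\Phi^*>0$ satisfy $\Phi^*=\frac{1}{\langle k\rangle}\sum_{i=1}^n \frac{i\,p(i)\,b\Phi^*}{d+bi\Phi^*}$. For $k=1,\dots,n$ put $N_k^*=\frac{bk\Phi^*}{d+bk\Phi^*}\in(0,1)$ and $\Lambda_k=bk(1-N_k^* )\Phi^*$ (so $\Lambda_k=dN_k^*>0$). Parameters: $\lambda(k)>0$, $\varphi(k)>0$, $\mu_k>0$ for $k=1,\dots,n$; constants $\beta,\gamma,\eta,\omega>0$ and $\delta\in[0,1]$. For functions $I_1(t),\dots,I_n(t)$ set $\Theta(t)=\frac{1}{\langle k\rangle}\sum_{i=1}^n\varphi(i)p(i)I_i(t)$. The SVIQS system is, for $k=1,\dots,n$: $S_k'=\Lambda_k-\lambda(k)S_k\Theta+\gamma I_k+\eta Q_k+\omega V_k-(\mu_k+d)S_k$, $V_k'=\mu_kS_k-\delta\lambda(k)V_k\Theta-(d+\omega)V_k$, $I_k'=\lambda(k)S_k\Theta+\delta\lambda(k)V_k\Theta-(\gamma+\beta+d)I_k$,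 $Q_k'=\beta I_k-(\eta+d)Q_k$. Its disease-free equilibrium $E^0$ is $S_k^0=\frac{(d+\omega)N_k^*}{\mu_k+\omega+d}$, $V_k^0=\frac{\mu_kN_k^*}{\mu_k+\omega+d}$, $I_k^0=Q_k^0=0$, and its basic reproduction number is $R_0=\frac{1}{\langle k\rangle}\sum_{i=1}^n\frac{\lambda(i)\varphi(i)p(i)\Lambda_i(\omega+d+\delta\mu_i)}{d(\gamma+\beta+d)(\omega+\mu_i+d)}$. *)

(* Defs.v *)
From Stdlib Require Import Reals.
Open Scope R_scope.

(* rsum n f = f 1 + f 2 + ... + f n  (indices k = 1..n as in the paper) *)
Fixpoint rsum (n : nat) (f : nat -> R) : R :=
  match n with
  | O => 0
  | S m => rsum m f + f (S m)
  end.

Definition kavg (n : nat) (p : nat -> R) : R := rsum n (fun k => INR k * p k).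

Definition Nstar (b d Phi : R) (k : nat) : R :=
  b * INR k * Phi / (d + b * INR k * Phi).

Definition Lam (b d Phi : R) (k : nat) : R :=
  b * INR k * (1 - Nstar b d Phi k) * Phi.

Definition Theta (n : nat) (p phi : nat -> R) (I : nat -> R -> R) (t : R) : R :=
  / kavg n p * rsum n (fun i => phi i * p i * I i t).

Definition R0_SVIQS (n : nat) (p : nat -> R) (b d Phi : R) (lam phi mu : nat -> R)
  (beta gamma omega delta : R) : R :=
  / kavg n p * rsum n (fun i =>
     lam i * phi i * p i * Lam b d Phi i * (omega + d + delta * mu i)
     / (d * (gamma + beta + d) * (omega + mu i + d))).

Definition Sdfe (b d Phi : R) (mu : nat -> R) (omega : R) (k : nat) : R :=
  (d + omega) * Nstar b d Phi k / (mu k + omega + d).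
Definition Vdfe (b d Phi : R) (mu : nat -> R) (omega : R) (k : nat) : R :=
  mu k * Nstar b d Phi k / (mu k + omega + d).

(* right-continuity at time 0 (solutions are only considered for t >= 0) *)
Definition rcont0 (f : R -> R) : Prop :=
  limit1_in f (fun s => 0 <= s) (f 0) 0.

Definition SVIQS_sol (n : nat) (p : nat -> R) (b d Phi : R)
  (lam phi mu : nat -> R) (beta gamma eta omega delta : R)
  (S V I Q : nat -> R -> R) : Prop :=
  forall k, (1 <= k <= n)%nat ->
    rcont0 (S k) /\ rcont0 (V k) /\ rcont0 (I k) /\ rcont0 (Q k) /\
    forall t, 0 < t ->
      derivable_pt_lim (S k) t
        (Lam b d Phi k - lam k * S k t * Theta n p phi I t + gamma * I k t
         + eta * Q k t + omega * V k t - (mu k + d) * S k t) /\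
      derivable_pt_lim (V k) t
        (mu k * S k t - delta * lam k * V k t * Theta n p phi I t
         - (d + omega) * V k t) /\
      derivable_pt_lim (I k) t
        (lam k * S k t * Theta n p phi I t
         + delta * lam k * V k t * Theta n p phi I t
         - (gamma + beta + d) * I k t) /\
      derivable_pt_lim (Q k) t (beta * I k t - (eta + d) * Q k t).

Definition feasible_init (n : nat) (b d Phi : R) (S V I Q : nat -> R -> R) : Prop :=
  forall k, (1 <= k <= n)%nat ->
    0 <= S k 0 /\ 0 <= V k 0 /\ 0 <= I k 0 /\ 0 <= Q k 0 /\
    S k 0 + V k 0 + I k 0 + Q k 0 = Nstar b d Phi k.

(* Main.v *)
Require Import Defs.
From Stdlib Require Import Reals Lra Lia Classical.
Open Scope R_scope.


Lemma dpl_ext f g x l : (forall t, f t = g t) -> derivable_pt_lim f x l -> derivable_pt_lim g x l.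
Proof.
  intros E H eps Heps. destruct (H eps Heps) as [del Hd]. exists del. intros h Hh Hh'.
  rewrite <- !E. apply Hd; auto.
Qed.

Lemma dpl_plus f g x a b : derivable_pt_lim f x a -> derivable_pt_lim g x b ->
  derivable_pt_lim (fun t => f t + g t) x (a + b).
Proof. intros; apply (derivable_pt_lim_plus f g); auto. Qed.

Lemma dpl_minus f g x a b : derivable_pt_lim f x a -> derivable_pt_lim g x b ->
  derivable_pt_lim (fun t => f t - g t) x (a - b).
Proof. intros; apply (derivable_pt_lim_minus f g); auto. Qed.

Lemma dpl_mult f g x a b : derivable_pt_lim f x a -> derivable_pt_lim g x b ->
  derivable_pt_lim (fun t => f t * g t) x (a * g x + f x * b).
Proof. intros; apply (derivable_pt_lim_mult f g); auto. Qed.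

Lemma dpl_const (c x : R) : derivable_pt_lim (fun _ => c) x 0.
Proof. apply (derivable_pt_lim_const c). Qed.

Lemma dpl_scal f x a c : derivable_pt_lim f x a -> derivable_pt_lim (fun t => c * f t) x (c * a).
Proof. intros H. apply (derivable_pt_lim_scal f c x a H). Qed.

Lemma dpl_explin (r x : R) : derivable_pt_lim (fun t => exp (r * t)) x (r * exp (r * x)).
Proof.
  assert (H1 : derivable_pt_lim (fun t => r * t) x r).
  { pose proof (dpl_scal id x 1 r (derivable_pt_lim_id x)) as H0.
    rewrite Rmult_1_r in H0. apply dpl_ext with (f := fun t => r * id t). intro; reflexivity. exact H0. }
  pose proof (derivable_pt_lim_comp (fun t => r * t) exp x r (exp (r * x)) H1 (derivable_pt_lim_exp _)) as H.
  replace (r * exp (r * x)) with (exp (r * x) * r) by ring. exact H.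
Qed.

Definition rc (f : R -> R) (a : R) : Prop := limit1_in f (fun s => a <= s) (f a) a.

Lemma rc_of_cont f a : continuity_pt f a -> rc f a.
Proof.
  intros H eps Heps. destruct (H eps Heps) as [alp [Ha Hb]]. exists alp. split; auto.
  intros x [Hx1 Hx2]. destruct (Req_dec a x) as [<-|Hne].
  - simpl. unfold R_dist. rewrite Rminus_diag, Rabs_R0. lra.
  - apply Hb. split; auto. split; auto. exact I.
Qed.

Lemma rc_of_dpl f a l : derivable_pt_lim f a l -> rc f a.
Proof.
  intros H. apply rc_of_cont. apply derivable_continuous_pt. exists l. exact H.
Qed.

Lemma rc_plus f g a : rc f a -> rc g a -> rc (fun t => f t + g t) a.
Proof. intros; unfold rc; apply limit_plus; auto. Qed.
Lemma rc_minus f g a : rc f a -> rc g a -> rc (fun t => f t - g t) a.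
Proof. intros; unfold rc; apply limit_minus; auto. Qed.
Lemma rc_mult f g a : rc f a -> rc g a -> rc (fun t => f t * g t) a.
Proof. intros; unfold rc; apply limit_mul; auto. Qed.
Lemma rc_const c a : rc (fun _ => c) a.
Proof. intros eps He. exists 1. split. lra. intros. simpl. unfold R_dist. rewrite Rminus_diag, Rabs_R0. lra. Qed.
Lemma rc_explin r a : rc (fun t => exp (r * t)) a.
Proof. exact (rc_of_dpl _ _ _ (dpl_explin r a)). Qed.

Lemma rc_unfold f a : rc f a -> forall eps, 0 < eps -> exists alp, 0 < alp /\
  forall s, a <= s < a + alp -> Rabs (f s - f a) < eps.
Proof.
  intros H eps He. destruct (H eps He) as [alp [Ha Hb]]. exists alp. split; auto.
  intros s Hs. apply (Hb s). split. lra. simpl. unfold R_dist. rewrite Rabs_right; lra.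
Qed.

Lemma mono (h h' : R -> R) a b : a <= b ->
  (forall t, a < t -> derivable_pt_lim h t (h' t)) ->
  (forall t, a < t -> h' t <= 0) -> rc h a -> h b <= h a.
Proof.
  intros Hab Hd Hn Hrc.
  destruct (Req_dec a b) as [<-|Hne]; [lra|].
  assert (Hs : forall s, a < s < b -> h b <= h s).
  { intros s Hs. destruct (MVT_cor2 h h' s b) as [c [Hc1 Hc2]]; [lra| |].
    - intros c Hc. apply Hd. lra.
    - assert (h' c <= 0) by (apply Hn; lra). nra. }
  destruct (Rle_dec (h b) (h a)) as [|Hgt]; auto. exfalso.
  destruct (rc_unfold h a Hrc (h b - h a)) as [alp [Ha Hb]]; [lra|].
  set (s := a + Rmin alp (b - a) / 2).
  assert (Hm1 : Rmin alp (b-a) <= alp) by apply Rmin_l.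
  assert (Hm2 : Rmin alp (b-a) <= b - a) by apply Rmin_r.
  assert (Hm3 : 0 < Rmin alp (b-a)) by (apply Rmin_pos; lra).
  specialize (Hb s). specialize (Hs s).
  assert (a <= s < a + alp) by (unfold s; lra).
  assert (a < s < b) by (unfold s; lra).
  specialize (Hb H). specialize (Hs H0).
  apply Rabs_def2 in Hb. lra.
Qed.

Lemma cmp_up (f f' : R -> R) r g a : 0 < r ->
  (forall t, a < t -> derivable_pt_lim f t (f' t)) ->
  (forall t, a < t -> f' t <= g - r * f t) -> rc f a ->
  forall t, a <= t -> f t <= g / r + (f a - g / r) * exp (- r * (t - a)).
Proof.
  intros Hr Hd Hb Hrc t Ht.
  set (h := fun s => (f s - g / r) * exp (r * s)).
  assert (Hm : h t <= h a).
  { apply (mono h (fun s => f' s * exp (r * s) + (f s - g / r) * (r * exp (r * s))) a t Ht).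
    - intros s Hs. unfold h. apply (dpl_mult (fun s => f s - g / r) (fun s => exp (r * s))).
      + replace (f' s) with (f' s - 0) by ring. apply (dpl_minus f (fun _ => g / r)). auto. apply dpl_const.
      + apply dpl_explin.
    - intros s Hs. specialize (Hb s Hs). pose proof (exp_pos (r * s)).
      replace (f' s * exp (r * s) + (f s - g / r) * (r * exp (r * s)))
        with ((f' s + r * f s - g) * exp (r * s)) by (field; lra).
      assert (f' s + r * f s - g <= 0) by lra. nra.
    - unfold h. apply (rc_mult (fun s => f s - g / r) (fun s => exp (r * s))).
      apply (rc_minus f (fun _ => g / r)). auto. apply rc_const. apply rc_explin. }
  unfold h in Hm.
  assert (E : exp (- r * (t - a)) * exp (r * t) = exp (r * a)).
  { rewrite <- exp_plus. f_equal. ring. }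
  pose proof (exp_pos (- r * (t - a))). pose proof (exp_pos (r * t)).
  assert (Hm' : (f t - g / r) * exp (r * t) * exp (- r * (t - a)) <=
                (f a - g / r) * exp (r * a) * exp (- r * (t - a))) by nra.
  assert (E2 : exp (r * t) * exp (- r * (t - a)) = exp (r * a) * exp (- r * (t - a)) * exp (r * t) / exp (r * a)).
  { rewrite <- E. field. split; lra. }
  assert (E3 : exp (r * t) * exp (- r * (t - a)) = exp (r * a)) by lra.
  assert (Hm'' : (f t - g / r) * exp (r * a) <= (f a - g / r) * exp (- r * (t - a)) * exp (r * a)).
  { replace ((f t - g / r) * exp (r * a)) with ((f t - g / r) * exp (r * t) * exp (- r * (t - a))) by (rewrite <- E3; ring).
    lra. }
  pose proof (exp_pos (r * a)).
  assert (f t - g / r <= (f a - g / r) * exp (- r * (t - a))).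
  { apply Rmult_le_reg_r with (exp (r * a)); auto. }
  lra.
Qed.

Lemma exp_neg_le1 r s : 0 <= r -> 0 <= s -> exp (- r * s) <= 1.
Proof.
  intros. destruct (Req_dec (r*s) 0) as [E|E].
  - replace (- r * s) with 0 by lra. rewrite exp_0; lra.
  - left. rewrite <- exp_0. apply exp_increasing. nra.
Qed.

Lemma cmp_max (f f' : R -> R) r g a : 0 < r ->
  (forall t, a < t -> derivable_pt_lim f t (f' t)) ->
  (forall t, a < t -> f' t <= g - r * f t) -> rc f a ->
  forall t, a <= t -> f t <= Rmax (g / r) (f a).
Proof.
  intros Hr Hd Hb Hrc t Ht. pose proof (cmp_up f f' r g a Hr Hd Hb Hrc t Ht).
  pose proof (exp_pos (- r * (t - a))). pose proof (exp_neg_le1 r (t - a) ltac:(lra) ltac:(lra)).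
  pose proof (Rmax_l (g / r) (f a)). pose proof (Rmax_r (g / r) (f a)).
  destruct (Rle_dec (f a) (g / r)); nra.
Qed.

Lemma cmp_lo (f f' : R -> R) r g a : 0 < r ->
  (forall t, a < t -> derivable_pt_lim f t (f' t)) ->
  (forall t, a < t -> g - r * f t <= f' t) -> rc f a ->
  forall t, a <= t -> g / r + (f a - g / r) * exp (- r * (t - a)) <= f t.
Proof.
  intros Hr Hd Hb Hrc t Ht.
  pose proof (cmp_up (fun s => - f s) (fun s => - f' s) r (- g) a Hr) as H.
  assert (H' : - f t <= - g / r + (- f a - - g / r) * exp (- r * (t - a))).
  { apply H; auto.
    - intros s Hs. apply dpl_ext with (f := fun s => 0 - f s). intro; ring.
      replace (- f' s) with (0 - f' s) by ring. apply dpl_minus. apply dpl_const. auto.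
    - intros s Hs. specialize (Hb s Hs). lra.
    - unfold rc. apply rc_minus with (f := fun _ => 0) (g := f) in Hrc.
      + intros eps He. destruct (Hrc eps He) as [al [A B]]. exists al. split; auto.
        intros x Hx. specialize (B x Hx). simpl in *. unfold R_dist in *.
        replace (- f x - - f a) with (0 - f x - (0 - f a)) by ring. auto.
      + apply rc_const. }
  replace (- g / r) with (- (g / r)) in H' by (field; lra). lra.
Qed.

Lemma cmp_min (f f' : R -> R) r g a : 0 < r ->
  (forall t, a < t -> derivable_pt_lim f t (f' t)) ->
  (forall t, a < t -> g - r * f t <= f' t) -> rc f a ->
  forall t, a <= t -> Rmin (g / r) (f a) <= f t.
Proof.
  intros Hr Hd Hb Hrc t Ht. pose proof (cmp_lo f f' r g a Hr Hd Hb Hrc t Ht).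
  pose proof (exp_pos (- r * (t - a))). pose proof (exp_neg_le1 r (t - a) ltac:(lra) ltac:(lra)).
  pose proof (Rmin_l (g / r) (f a)). pose proof (Rmin_r (g / r) (f a)).
  destruct (Rle_dec (f a) (g / r)); nra.
Qed.

Lemma exp_small C r x a : 0 < r -> 0 < x -> exists T, a <= T /\
  forall t, T <= t -> Rabs C * exp (- r * (t - a)) <= x.
Proof.
  intros Hr Hx. exists (a + Rabs C / (x * r)). split.
  { assert (0 <= Rabs C / (x * r)) by (unfold Rdiv; apply Rmult_le_pos; [apply Rabs_pos| left; apply Rinv_0_lt_compat; nra]). lra. }
  intros t Ht. pose proof (Rabs_pos C).
  assert (H1 : 1 + r * (t - a) <= exp (r * (t - a))) by apply exp_ineq1_le.
  assert (E : exp (- r * (t - a)) * exp (r * (t - a)) = 1).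
  { rewrite <- exp_plus. replace (- r * (t - a) + r * (t - a)) with 0 by ring. apply exp_0. }
  assert (H2 : Rabs C / x <= r * (t - a)).
  { assert (HH : Rabs C / (x * r) <= t - a) by lra.
    apply Rmult_le_compat_l with (r := r) in HH; [|lra].
    replace (r * (Rabs C / (x * r))) with (Rabs C / x) in HH by (field; lra). exact HH. }
  pose proof (exp_pos (- r * (t - a))). pose proof (exp_pos (r * (t - a))).
  assert (Rabs C <= x * (r * (t - a))).
  { apply Rmult_le_compat_l with (r := x) in H2; [|lra].
    replace (x * (Rabs C / x)) with (Rabs C) in H2 by (field; lra). exact H2. }
  assert (Rabs C <= x * exp (r * (t - a))) by nra.
  nra.
Qed.

Lemma ev_up (f f' : R -> R) r g a : 0 < r ->
  (forall t, a < t -> derivable_pt_lim f t (f' t)) ->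
  (forall t, a < t -> f' t <= g - r * f t) -> rc f a ->
  forall x, 0 < x -> exists T, a <= T /\ forall t, T <= t -> f t <= g / r + x.
Proof.
  intros Hr Hd Hb Hrc x Hx. destruct (exp_small (f a - g / r) r x a Hr Hx) as [T [HT HT2]].
  exists T. split; auto. intros t Ht. pose proof (cmp_up f f' r g a Hr Hd Hb Hrc t ltac:(lra)).
  specialize (HT2 t Ht). pose proof (exp_pos (- r * (t - a))).
  pose proof (Rle_abs (f a - g / r)). nra.
Qed.

Lemma ev_lo (f f' : R -> R) r g a : 0 < r ->
  (forall t, a < t -> derivable_pt_lim f t (f' t)) ->
  (forall t, a < t -> g - r * f t <= f' t) -> rc f a ->
  forall x, 0 < x -> exists T, a <= T /\ forall t, T <= t -> g / r - x <= f t.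
Proof.
  intros Hr Hd Hb Hrc x Hx. destruct (exp_small (f a - g / r) r x a Hr Hx) as [T [HT HT2]].
  exists T. split; auto. intros t Ht. pose proof (cmp_lo f f' r g a Hr Hd Hb Hrc t ltac:(lra)).
  specialize (HT2 t Ht). pose proof (exp_pos (- r * (t - a))).
  pose proof (Rle_abs (- (f a - g / r))). rewrite Rabs_Ropp in H1. nra.
Qed.


Lemma deriv_cross h t l : 0 < t -> derivable_pt_lim h t l -> h t = 0 ->
  (forall s, 0 <= s < t -> 0 < h s) -> l <= 0.
Proof.
  intros Ht Hd H0 Hpos. destruct (Rle_dec l 0) as [|Hl]; auto. exfalso.
  destruct (Hd l ltac:(lra)) as [del Hdel].
  pose proof (cond_pos del) as Hdp.
  set (hh := - (Rmin del t / 2)).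
  assert (Hm1 : Rmin del t <= del) by apply Rmin_l.
  assert (Hm2 : Rmin del t <= t) by apply Rmin_r.
  assert (Hm3 : 0 < Rmin del t) by (apply Rmin_pos; lra).
  assert (hh <> 0) by (unfold hh; lra).
  assert (Rabs hh < del) by (unfold hh; rewrite Rabs_Ropp, Rabs_right; lra).
  specialize (Hdel hh H H1). rewrite H0 in Hdel.
  assert (0 < h (t + hh)) by (apply Hpos; unfold hh; lra).
  assert ((h (t + hh) - 0) / hh < 0).
  { unfold Rdiv. rewrite Rminus_0_r. apply Rmult_pos_neg; auto. apply Rinv_lt_0_compat. unfold hh; lra. }
  apply Rabs_def2 in Hdel. lra.
Qed.

Lemma left_neg h t l : 0 < t -> derivable_pt_lim h t l -> h t < 0 ->
  exists s, 0 <= s < t /\ h s < 0.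
Proof.
  intros Ht Hd Hn.
  assert (Hc : continuity_pt h t) by (apply derivable_continuous_pt; exists l; exact Hd).
  destruct (Hc (- h t) ltac:(lra)) as [alp [Ha Hb]].
  set (s := t - Rmin alp t / 2).
  assert (Hm1 : Rmin alp t <= alp) by apply Rmin_l.
  assert (Hm2 : Rmin alp t <= t) by apply Rmin_r.
  assert (Hm3 : 0 < Rmin alp t) by (apply Rmin_pos; lra).
  exists s. split. unfold s; lra.
  assert (Hx : D_x no_cond t s /\ R_dist s t < alp).
  { split. split. exact I. unfold s; lra. unfold R_dist, s.
    rewrite Rabs_left; lra. }
  specialize (Hb s Hx). simpl in Hb. unfold R_dist in Hb. apply Rabs_def2 in Hb. lra.
Qed.

Lemma fin_nbhd (P : nat -> R -> R) a m :
  (forall k, (1 <= k <= m)%nat -> rc (P k) a /\ 0 < P k a) ->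
  exists del, 0 < del /\ forall s, a <= s < a + del -> forall k, (1 <= k <= m)%nat -> 0 < P k s.
Proof.
  induction m as [|m IH]; intros H.
  - exists 1. split. lra. intros s Hs k Hk. lia.
  - destruct IH as [d1 [Hd1 H1]].
    { intros k Hk. apply H. lia. }
    destruct (H (S m) ltac:(lia)) as [Hrc Hp].
    destruct (rc_unfold _ _ Hrc (P (S m) a) Hp) as [d2 [Hd2 H2]].
    exists (Rmin d1 d2). split. apply Rmin_pos; auto.
    intros s Hs k Hk. pose proof (Rmin_l d1 d2). pose proof (Rmin_r d1 d2).
    destruct (Nat.eq_dec k (S m)) as [->|Hne].
    + specialize (H2 s ltac:(lra)). apply Rabs_def2 in H2. lra.
    + apply H1. lra. lia.
Qed.

Lemma rsum_le m f g : (forall k, (1 <= k <= m)%nat -> f k <= g k) -> rsum m f <= rsum m g.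
Proof.
  induction m; intros H; simpl. lra.
  assert (rsum m f <= rsum m g) by (apply IHm; intros; apply H; lia).
  assert (f (S m) <= g (S m)) by (apply H; lia). lra.
Qed.

Lemma rsum_eq m f g : (forall k, (1 <= k <= m)%nat -> f k = g k) -> rsum m f = rsum m g.
Proof.
  intros H. apply Rle_antisym; apply rsum_le; intros k Hk; rewrite (H k Hk); lra.
Qed.

Lemma rsum_plus m f g : rsum m (fun k => f k + g k) = rsum m f + rsum m g.
Proof. induction m; simpl. ring. rewrite IHm. ring. Qed.

Lemma rsum_minus m f g : rsum m (fun k => f k - g k) = rsum m f - rsum m g.
Proof. induction m; simpl. ring. rewrite IHm. ring. Qed.

Lemma rsum_scal m c f : rsum m (fun k => c * f k) = c * rsum m f.
Proof. induction m; simpl. ring. rewrite IHm. ring. Qed.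

Lemma rsum_nonneg m f : (forall k, (1 <= k <= m)%nat -> 0 <= f k) -> 0 <= rsum m f.
Proof.
  intros H. replace 0 with (rsum m (fun _ => 0)). apply rsum_le; auto.
  induction m; simpl; auto. rewrite IHm. ring. intros; apply H; lia.
Qed.

Lemma rsum_pos m f : (1 <= m)%nat -> (forall k, (1 <= k <= m)%nat -> 0 < f k) -> 0 < rsum m f.
Proof.
  intros Hm H. destruct m. lia. simpl.
  assert (0 <= rsum m f) by (apply rsum_nonneg; intros; left; apply H; lia).
  assert (0 < f (S m)) by (apply H; lia). lra.
Qed.

Lemma rsum_term m f j : (forall k, (1 <= k <= m)%nat -> 0 <= f k) -> (1 <= j <= m)%nat ->
  f j <= rsum m f.
Proof.
  induction m; intros H Hj. lia. simpl.
  destruct (Nat.eq_dec j (S m)) as [->|Hne].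
  - assert (0 <= rsum m f) by (apply rsum_nonneg; intros; apply H; lia). lra.
  - assert (f j <= rsum m f) by (apply IHm; [intros; apply H; lia | lia]).
    assert (0 <= f (S m)) by (apply H; lia). lra.
Qed.

Lemma rsum_dpl m (F : nat -> R -> R) (F' : nat -> R) t :
  (forall k, (1 <= k <= m)%nat -> derivable_pt_lim (F k) t (F' k)) ->
  derivable_pt_lim (fun s => rsum m (fun k => F k s)) t (rsum m F').
Proof.
  induction m; intros H; simpl.
  - apply dpl_const.
  - apply (dpl_plus (fun s => rsum m (fun k => F k s)) (F (S m))).
    apply IHm; intros; apply H; lia. apply H; lia.
Qed.

Lemma rsum_rc m (F : nat -> R -> R) a :
  (forall k, (1 <= k <= m)%nat -> rc (F k) a) -> rc (fun s => rsum m (fun k => F k s)) a.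
Proof.
  induction m; intros H; simpl.
  - apply rc_const.
  - apply (rc_plus (fun s => rsum m (fun k => F k s)) (F (S m))).
    apply IHm; intros; apply H; lia. apply H; lia.
Qed.

Lemma prod_lb a bb e A K B : 0 < e -> 0 <= K -> -e <= a -> Rabs a <= A -> - (K * e) <= bb -> Rabs bb <= B ->
  - ((A * K + B) * e) <= a * bb.
Proof.
  intros He HK Ha HA Hb HB.
  destruct (Rle_dec 0 a); destruct (Rle_dec 0 bb).
  - pose proof (Rabs_pos a). pose proof (Rabs_pos bb).
    assert (0 <= a * bb) by (apply Rmult_le_pos; lra).
    assert (0 <= B * e) by (apply Rmult_le_pos; lra).
    assert (0 <= A * K * e) by (apply Rmult_le_pos; [apply Rmult_le_pos|]; lra). nra.
  - rewrite Rabs_right in HA by lra. pose proof (Rabs_pos bb).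
    assert (0 <= a * (bb + K * e)) by (apply Rmult_le_pos; lra).
    assert (0 <= (A - a) * (K * e)) by (apply Rmult_le_pos; nra).
    assert (0 <= B * e) by (apply Rmult_le_pos; lra). nra.
  - rewrite Rabs_right in HB by lra. pose proof (Rabs_pos a).
    assert (0 <= bb * (a + e)) by (apply Rmult_le_pos; lra).
    assert (0 <= (B - bb) * e) by (apply Rmult_le_pos; lra).
    assert (0 <= A * K * e) by (apply Rmult_le_pos; [apply Rmult_le_pos|]; lra). nra.
  - pose proof (Rabs_pos a). pose proof (Rabs_pos bb).
    assert (0 <= a * bb) by nra.
    assert (0 <= B * e) by (apply Rmult_le_pos; lra).
    assert (0 <= A * K * e) by (apply Rmult_le_pos; [apply Rmult_le_pos|]; lra). nra.
Qed.

Lemma Rdiv_le_0_compat x y : 0 <= x -> 0 < y -> 0 <= x / y.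
Proof. intros. unfold Rdiv. apply Rmult_le_pos; auto. left; apply Rinv_0_lt_compat; auto. Qed.


Section Sys.
Variables (n : nat) (p : nat -> R) (b d Phi : R)
  (lam phi mu : nat -> R) (beta gamma eta omega delta : R).
Hypotheses (Hn : (1 <= n)%nat)
  (Hp : forall k, (1 <= k <= n)%nat -> 0 < p k)
  (Hd : 0 < d) (Hbd : d < b)
  (HPhi : 0 < Phi)
  (Hlam : forall k, (1 <= k <= n)%nat -> 0 < lam k)
  (Hphi : forall k, (1 <= k <= n)%nat -> 0 < phi k)
  (Hmu : forall k, (1 <= k <= n)%nat -> 0 < mu k)
  (Hbeta : 0 < beta) (Hgamma : 0 < gamma) (Heta : 0 < eta) (Homega : 0 < omega)
  (Hdelta : 0 <= delta <= 1)
  (Hoe : eta <= omega) (Heg : eta = gamma).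

Lemma ka_pos : 0 < kavg n p.
Proof.
  unfold kavg. apply rsum_pos; auto. intros k Hk.
  apply Rmult_lt_0_compat. apply lt_0_INR; lia. auto.
Qed.

Lemma INR_pos k : (1 <= k <= n)%nat -> 0 < INR k.
Proof. intros; apply lt_0_INR; lia. Qed.

Lemma bkP_pos k : (1 <= k <= n)%nat -> 0 < b * INR k * Phi.
Proof. intros Hk. pose proof (INR_pos k Hk). apply Rmult_lt_0_compat; [apply Rmult_lt_0_compat|]; lra. Qed.

Lemma Ns_pos k : (1 <= k <= n)%nat -> 0 < Nstar b d Phi k.
Proof.
  intros Hk. pose proof (bkP_pos k Hk). unfold Nstar.
  apply Rdiv_lt_0_compat; lra.
Qed.

Lemma Ns_le1 k : (1 <= k <= n)%nat -> Nstar b d Phi k <= 1.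
Proof.
  intros Hk. pose proof (bkP_pos k Hk). unfold Nstar.
  apply Rmult_le_reg_r with (d + b * INR k * Phi). lra.
  unfold Rdiv. rewrite Rmult_assoc, Rinv_l by lra. lra.
Qed.

Lemma Lam_eq k : (1 <= k <= n)%nat -> Lam b d Phi k = d * Nstar b d Phi k.
Proof.
  intros Hk. pose proof (bkP_pos k Hk). unfold Lam, Nstar. field. lra.
Qed.

Lemma SV_sum k : (1 <= k <= n)%nat -> Sdfe b d Phi mu omega k + Vdfe b d Phi mu omega k = Nstar b d Phi k.
Proof.
  intros Hk. pose proof (Hmu k Hk). unfold Sdfe, Vdfe. field. lra.
Qed.

Lemma Sdfe_nn k : (1 <= k <= n)%nat -> 0 <= Sdfe b d Phi mu omega k.
Proof.
  intros Hk. pose proof (Hmu k Hk). pose proof (Ns_pos k Hk). unfold Sdfe.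
  left. apply Rdiv_lt_0_compat; [apply Rmult_lt_0_compat|]; lra.
Qed.

Lemma Vdfe_nn k : (1 <= k <= n)%nat -> 0 <= Vdfe b d Phi mu omega k.
Proof.
  intros Hk. pose proof (Hmu k Hk). pose proof (Ns_pos k Hk). unfold Vdfe.
  left. apply Rdiv_lt_0_compat; [apply Rmult_lt_0_compat|]; lra.
Qed.

Lemma cR0 : (gamma + beta + d) * R0_SVIQS n p b d Phi lam phi mu beta gamma omega delta =
  / kavg n p * rsum n (fun i => lam i * phi i * p i *
     (Sdfe b d Phi mu omega i + delta * Vdfe b d Phi mu omega i)).
Proof.
  unfold R0_SVIQS. rewrite <- Rmult_assoc, (Rmult_comm _ (/ _)), Rmult_assoc.
  f_equal. rewrite <- rsum_scal. apply rsum_eq. intros k Hk.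
  rewrite Lam_eq by auto. pose proof (Hmu k Hk). unfold Sdfe, Vdfe. field. lra.
Qed.


Section Sol.
Variables S V I Q : nat -> R -> R.
Hypothesis Hsol : SVIQS_sol n p b d Phi lam phi mu beta gamma eta omega delta S V I Q.
Hypothesis Hinit : feasible_init n b d Phi S V I Q.

Local Notation Th := (Theta n p phi I).
Local Notation Ns := (Nstar b d Phi).
Local Notation dS k t := (Lam b d Phi k - lam k * S k t * Th t + gamma * I k t
         + eta * Q k t + omega * V k t - (mu k + d) * S k t).
Local Notation dV k t := (mu k * S k t - delta * lam k * V k t * Th t - (d + omega) * V k t).
Local Notation dI k t := (lam k * S k t * Th t + delta * lam k * V k t * Th t - (gamma + beta + d) * I k t).
Local Notation dQ k t := (beta * I k t - (eta + d) * Q k t).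

Lemma dpS k t : (1 <= k <= n)%nat -> 0 < t -> derivable_pt_lim (S k) t (dS k t).
Proof. intros Hk Ht. apply (Hsol k Hk). auto. Qed.
Lemma dpV k t : (1 <= k <= n)%nat -> 0 < t -> derivable_pt_lim (V k) t (dV k t).
Proof. intros Hk Ht. apply (Hsol k Hk). auto. Qed.
Lemma dpI k t : (1 <= k <= n)%nat -> 0 < t -> derivable_pt_lim (I k) t (dI k t).
Proof. intros Hk Ht. apply (Hsol k Hk). auto. Qed.
Lemma dpQ k t : (1 <= k <= n)%nat -> 0 < t -> derivable_pt_lim (Q k) t (dQ k t).
Proof. intros Hk Ht. apply (Hsol k Hk). auto. Qed.

Lemma rc_gen (f : R -> R) a : rcont0 f -> (forall t, 0 < t -> exists l, derivable_pt_lim f t l) ->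
  0 <= a -> rc f a.
Proof.
  intros H0 Hder Ha. destruct (Req_dec a 0) as [->|Hne]. exact H0.
  destruct (Hder a ltac:(lra)) as [l Hl]. exact (rc_of_dpl _ _ _ Hl).
Qed.

Lemma rcS k a : (1 <= k <= n)%nat -> 0 <= a -> rc (S k) a.
Proof. intros Hk Ha. apply rc_gen; auto. apply (Hsol k Hk). intros t Ht; eexists; apply dpS; auto. Qed.
Lemma rcV k a : (1 <= k <= n)%nat -> 0 <= a -> rc (V k) a.
Proof. intros Hk Ha. apply rc_gen; auto. apply (Hsol k Hk). intros t Ht; eexists; apply dpV; auto. Qed.
Lemma rcI k a : (1 <= k <= n)%nat -> 0 <= a -> rc (I k) a.
Proof. intros Hk Ha. apply rc_gen; auto. apply (Hsol k Hk). intros t Ht; eexists; apply dpI; auto. Qed.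
Lemma rcQ k a : (1 <= k <= n)%nat -> 0 <= a -> rc (Q k) a.
Proof. intros Hk Ha. apply rc_gen; auto. apply (Hsol k Hk). intros t Ht; eexists; apply dpQ; auto. Qed.

Lemma dpTh t : 0 < t -> derivable_pt_lim Th t
  (/ kavg n p * rsum n (fun i => phi i * p i * dI i t)).
Proof.
  intros Ht. unfold Theta.
  apply (dpl_scal (fun s => rsum n (fun i => phi i * p i * I i s))).
  apply (rsum_dpl n (fun i s => phi i * p i * I i s)).
  intros k Hk. apply dpl_scal. apply dpI; auto.
Qed.

Lemma rcTh a : 0 <= a -> rc Th a.
Proof.
  intros Ha. unfold Theta.
  apply (rc_mult (fun _ => / kavg n p) (fun s => rsum n (fun i => phi i * p i * I i s))).
  apply rc_const.
  apply (rsum_rc n (fun i s => phi i * p i * I i s)). intros k Hk.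
  apply (rc_mult (fun _ => phi k * p k) (I k)). apply rc_const. apply rcI; auto.
Qed.

Lemma N_const k t : (1 <= k <= n)%nat -> 0 <= t -> S k t + V k t + I k t + Q k t = Ns k.
Proof.
  intros Hk Ht.
  set (f := fun s => S k s + V k s + I k s + Q k s).
  assert (Hd' : forall s, 0 < s -> derivable_pt_lim f s (d * Ns k - d * f s)).
  { intros s Hs. unfold f.
    apply dpl_ext with (f := fun s => S k s + V k s + I k s + Q k s). intro; reflexivity.
    assert (E : d * Ns k - d * (S k s + V k s + I k s + Q k s) = dS k s + dV k s + dI k s + dQ k s).
    { rewrite (Lam_eq k Hk). ring. }
    rewrite E.
    apply (dpl_plus (fun s => S k s + V k s + I k s) (Q k)); [|apply dpQ; auto].
    apply (dpl_plus (fun s => S k s + V k s) (I k)); [|apply dpI; auto].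
    apply (dpl_plus (S k) (V k)); [apply dpS; auto|apply dpV; auto]. }
  assert (Hrc : rc f 0).
  { unfold f. apply (rc_plus (fun s => S k s + V k s + I k s) (Q k)); [|apply rcQ; auto; lra].
    apply (rc_plus (fun s => S k s + V k s) (I k)); [|apply rcI; auto; lra].
    apply (rc_plus (S k) (V k)); [apply rcS; auto; lra|apply rcV; auto; lra]. }
  assert (H0 : f 0 = Ns k) by (unfold f; apply Hinit; auto).
  pose proof (cmp_up f (fun s => d * Ns k - d * f s) d (d * Ns k) 0 Hd Hd') as H1.
  pose proof (cmp_lo f (fun s => d * Ns k - d * f s) d (d * Ns k) 0 Hd Hd') as H2.
  assert (f t <= d * Ns k / d + (f 0 - d * Ns k / d) * exp (- d * (t - 0))).
  { apply H1; auto. intros; lra. }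
  assert (d * Ns k / d + (f 0 - d * Ns k / d) * exp (- d * (t - 0)) <= f t).
  { apply H2; auto. intros; lra. }
  replace (d * Ns k / d) with (Ns k) in * by (field; lra).
  rewrite H0 in *. unfold f in *. lra.
Qed.


Definition KT := / kavg n p * rsum n (fun i => phi i * p i).
Definition MM := 1 + gamma + eta + omega + beta + rsum n mu + 16 * rsum n lam * KT.

Lemma KT_pos : 0 < KT.
Proof.
  unfold KT. pose proof ka_pos. apply Rmult_lt_0_compat. apply Rinv_0_lt_compat; auto.
  apply rsum_pos; auto. intros k Hk. apply Rmult_lt_0_compat; auto.
Qed.

Lemma lam_le k : (1 <= k <= n)%nat -> lam k <= rsum n lam.
Proof. intros Hk. apply rsum_term; auto. intros; left; auto. Qed.
Lemma mu_le k : (1 <= k <= n)%nat -> mu k <= rsum n mu.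
Proof. intros Hk. apply rsum_term; auto. intros; left; auto. Qed.

Lemma MM_pos : 1 <= MM.
Proof.
  unfold MM. pose proof KT_pos.
  assert (0 <= rsum n mu) by (apply rsum_nonneg; intros; left; auto).
  assert (0 <= rsum n lam) by (apply rsum_nonneg; intros; left; auto).
  assert (0 <= rsum n lam * KT) by (apply Rmult_le_pos; lra). lra.
Qed.

Lemma Th_bounds t e : 0 < e -> e <= 1 ->
  (forall i, (1 <= i <= n)%nat -> - e <= I i t <= 4) ->
  - (KT * e) <= Th t /\ Rabs (Th t) <= 4 * KT.
Proof.
  intros He He1 HI. pose proof ka_pos. pose proof KT_pos.
  assert (L : / kavg n p * rsum n (fun i => phi i * p i * (- e)) <= Th t).
  { unfold Theta. apply Rmult_le_compat_l. left; apply Rinv_0_lt_compat; auto.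
    apply rsum_le. intros k Hk. apply Rmult_le_compat_l.
    left; apply Rmult_lt_0_compat; auto. apply HI; auto. }
  assert (U : Th t <= / kavg n p * rsum n (fun i => phi i * p i * 4)).
  { unfold Theta. apply Rmult_le_compat_l. left; apply Rinv_0_lt_compat; auto.
    apply rsum_le. intros k Hk. apply Rmult_le_compat_l.
    left; apply Rmult_lt_0_compat; auto. apply HI; auto. }
  rewrite (rsum_eq n _ (fun i => (- e) * (phi i * p i))) in L by (intros; ring).
  rewrite (rsum_eq n _ (fun i => 4 * (phi i * p i))) in U by (intros; ring).
  rewrite rsum_scal in L, U. fold KT in *.
  replace (/ kavg n p * (- e * rsum n (fun i => phi i * p i))) with (- (KT * e)) in L
    by (unfold KT; ring).
  replace (/ kavg n p * (4 * rsum n (fun i => phi i * p i))) with (4 * KT) in U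
    by (unfold KT; ring).
  split. lra. apply Rabs_le. split; nra.
Qed.

Section PosEps.
Variables (T eps : R).
Hypotheses (HT : 0 < T) (Heps : 0 < eps) (Heps1 : eps * exp (MM * T) <= 1).

Let e := fun s => eps * exp (MM * s).
Let Good t := forall s, 0 <= s <= t -> forall k, (1 <= k <= n)%nat ->
  0 < S k s + e s /\ 0 < V k s + e s /\ 0 < I k s + e s /\ 0 < Q k s + e s.
Let A t := 0 <= t <= T /\ Good t.

Lemma e_pos s : 0 < e s.
Proof. unfold e. apply Rmult_lt_0_compat; auto. apply exp_pos. Qed.

Lemma e_le1 s : s <= T -> e s <= 1.
Proof.
  intros Hs. unfold e. pose proof MM_pos.
  assert (exp (MM * s) <= exp (MM * T)).
  { destruct (Req_dec s T) as [->|]. lra. left. apply exp_increasing. nra. }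
  pose proof (exp_pos (MM * s)). nra.
Qed.

Lemma de s : derivable_pt_lim e s (eps * (MM * exp (MM * s))).
Proof. unfold e. apply (dpl_scal (fun s => exp (MM * s))). apply dpl_explin. Qed.

Lemma rce a : rc e a.
Proof. exact (rc_of_dpl _ _ _ (de a)). Qed.

Lemma nb_all a : 0 <= a -> (forall k, (1 <= k <= n)%nat ->
  0 < S k a + e a /\ 0 < V k a + e a /\ 0 < I k a + e a /\ 0 < Q k a + e a) ->
  exists del, 0 < del /\ forall s, a <= s < a + del -> forall k, (1 <= k <= n)%nat ->
  0 < S k s + e s /\ 0 < V k s + e s /\ 0 < I k s + e s /\ 0 < Q k s + e s.
Proof.
  intros Ha H.
  destruct (fin_nbhd (fun k s => S k s + e s) a n) as [d1 [Hd1 H1]].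
  { intros k Hk. split. apply (rc_plus (S k) e). apply rcS; auto. apply rce. apply H; auto. }
  destruct (fin_nbhd (fun k s => V k s + e s) a n) as [d2 [Hd2 H2]].
  { intros k Hk. split. apply (rc_plus (V k) e). apply rcV; auto. apply rce. apply H; auto. }
  destruct (fin_nbhd (fun k s => I k s + e s) a n) as [d3 [Hd3 H3]].
  { intros k Hk. split. apply (rc_plus (I k) e). apply rcI; auto. apply rce. apply H; auto. }
  destruct (fin_nbhd (fun k s => Q k s + e s) a n) as [d4 [Hd4 H4]].
  { intros k Hk. split. apply (rc_plus (Q k) e). apply rcQ; auto. apply rce. apply H; auto. }
  exists (Rmin (Rmin d1 d2) (Rmin d3 d4)). split.
  { repeat apply Rmin_pos; auto. }
  intros s Hs k Hk.
  pose proof (Rmin_l (Rmin d1 d2) (Rmin d3 d4)). pose proof (Rmin_r (Rmin d1 d2) (Rmin d3 d4)).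
  pose proof (Rmin_l d1 d2). pose proof (Rmin_r d1 d2). pose proof (Rmin_l d3 d4). pose proof (Rmin_r d3 d4).
  repeat split.
  apply (H1 s ltac:(lra) k Hk). apply (H2 s ltac:(lra) k Hk).
  apply (H3 s ltac:(lra) k Hk). apply (H4 s ltac:(lra) k Hk).
Qed.

Lemma pos_eps : forall k, (1 <= k <= n)%nat ->
  0 < S k T + e T /\ 0 < V k T + e T /\ 0 < I k T + e T /\ 0 < Q k T + e T.
Proof.
  assert (HA0 : A 0).
  { split. lra. intros s Hs k Hk. assert (s = 0) by lra. subst s.
    destruct (Hinit k Hk) as [h1 [h2 [h3 [h4 _]]]]. pose proof (e_pos 0). lra. }
  assert (HbdA : bound A) by (exists T; intros t [Ht _]; lra).
  destruct (completeness A HbdA (ex_intro _ 0 HA0)) as [t1 [Hub Hlub]].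
  assert (Ht1T : t1 <= T) by (apply Hlub; intros t [Ht _]; lra).
  assert (Ht10 : 0 <= t1) by (apply Hub; auto).
  assert (Hbef : forall s, 0 <= s < t1 -> forall k, (1 <= k <= n)%nat ->
     0 < S k s + e s /\ 0 < V k s + e s /\ 0 < I k s + e s /\ 0 < Q k s + e s).
  { intros s Hs k Hk. destruct (classic (exists t, A t /\ s < t)) as [[t [[_ Gt] Hst]]|Hno].
    - apply Gt; auto. lra.
    - exfalso. assert (is_upper_bound A s).
      { intros t At. destruct (Rle_dec t s); auto. exfalso. apply Hno. exists t. split; auto. lra. }
      specialize (Hlub s H). lra. }
  assert (Ht1p : 0 < t1).
  { destruct (nb_all 0 ltac:(lra)) as [del [Hdel Hn0]].
    { intros k Hk. apply HA0; auto. lra. }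
    set (t' := Rmin (del / 2) T).
    assert (Hm1 : t' <= del / 2) by apply Rmin_l. assert (Hm2 : t' <= T) by apply Rmin_r.
    assert (Hm3 : 0 < t') by (apply Rmin_pos; lra).
    assert (A t') by (split; [lra|]; intros s Hs k Hk; apply Hn0; auto; lra).
    specialize (Hub t' H). lra. }
  assert (Hw : forall k, (1 <= k <= n)%nat ->
     0 <= S k t1 + e t1 /\ 0 <= V k t1 + e t1 /\ 0 <= I k t1 + e t1 /\ 0 <= Q k t1 + e t1).
  { intros k Hk.
    assert (W : forall (X : R -> R) l, derivable_pt_lim X t1 l ->
               (forall s, 0 <= s < t1 -> 0 < X s) -> 0 <= X t1).
    { intros X l HX Hpos. destruct (Rle_dec 0 (X t1)) as [|Hneg]; auto.
      destruct (left_neg X t1 l Ht1p HX ltac:(lra)) as [s [Hs1 Hs2]].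
      specialize (Hpos s Hs1). lra. }
    repeat split.
    - apply (W (fun s => S k s + e s) _ (dpl_plus (S k) e _ _ _ (dpS k t1 Hk Ht1p) (de t1))).
      intros s Hs; apply Hbef; auto.
    - apply (W (fun s => V k s + e s) _ (dpl_plus (V k) e _ _ _ (dpV k t1 Hk Ht1p) (de t1))).
      intros s Hs; apply Hbef; auto.
    - apply (W (fun s => I k s + e s) _ (dpl_plus (I k) e _ _ _ (dpI k t1 Hk Ht1p) (de t1))).
      intros s Hs; apply Hbef; auto.
    - apply (W (fun s => Q k s + e s) _ (dpl_plus (Q k) e _ _ _ (dpQ k t1 Hk Ht1p) (de t1))).
      intros s Hs; apply Hbef; auto. }
  set (e1 := e t1).
  assert (He1 : 0 < e1) by apply e_pos.
  assert (He11 : e1 <= 1) by (apply e_le1; auto).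
  assert (Bnd : forall k, (1 <= k <= n)%nat ->
     -e1 <= S k t1 <= 4 /\ -e1 <= V k t1 <= 4 /\ -e1 <= I k t1 <= 4 /\ -e1 <= Q k t1 <= 4).
  { intros k Hk. destruct (Hw k Hk) as [w1 [w2 [w3 w4]]]. pose proof (N_const k t1 Hk Ht10).
    pose proof (Ns_le1 k Hk). fold e1 in w1, w2, w3, w4. lra. }
  destruct (Th_bounds t1 e1 He1 He11) as [ThL ThU].
  { intros i Hi. apply Bnd; auto. }
  pose proof KT_pos as HKT.
  assert (ThL4 : -(4 * KT) <= Th t1) by (pose proof (Rle_abs (- Th t1)) as Hb0; rewrite Rabs_Ropp in Hb0; lra).
  assert (Hs : forall k, (1 <= k <= n)%nat ->
     0 < S k t1 + e t1 /\ 0 < V k t1 + e t1 /\ 0 < I k t1 + e t1 /\ 0 < Q k t1 + e t1).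
  { intros k Hk. destruct (Hw k Hk) as [w1 [w2 [w3 w4]]]. fold e1 in w1, w2, w3, w4.
    destruct (Bnd k Hk) as [[bS1 bS2] [[bV1 bV2] [[bI1 bI2] [bQ1 bQ2]]]].
    pose proof (lam_le k Hk). pose proof (mu_le k Hk). pose proof (Hlam k Hk). pose proof (Hmu k Hk).
    assert (Hde : eps * (MM * exp (MM * t1)) = MM * e1) by (unfold e1, e; ring).
    assert (Cr : forall (X : R -> R) l, derivable_pt_lim X t1 l -> X t1 = 0 ->
               (forall s, 0 <= s < t1 -> 0 < X s) -> l <= 0).
    { intros X l HX HX0 Hpos. apply (deriv_cross X t1 l); auto. }
    assert (HMM : MM = 1 + gamma + eta + omega + beta + rsum n mu + 16 * rsum n lam * KT) by reflexivity.
    assert (LKT : lam k * KT <= rsum n lam * KT) by (apply Rmult_le_compat_r; lra).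
    assert (Lam0 : 0 <= Lam b d Phi k) by (rewrite Lam_eq; auto; pose proof (Ns_pos k Hk); nra).
    repeat split.
    - destruct (Rle_dec (S k t1 + e t1) 0) as [Hz|]; [|lra]. exfalso.
      assert (Hz' : S k t1 = - e1) by (fold e1 in Hz; lra).
      pose proof (Cr (fun s => S k s + e s) _ (dpl_plus (S k) e _ _ _ (dpS k t1 Hk Ht1p) (de t1))
        ltac:(simpl; fold e1; lra) ltac:(intros s Hs0; apply Hbef; auto)) as C.
      rewrite Hde, Hz', HMM in C.
      assert (0 <= lam k * KT * e1) by (apply Rmult_le_pos; [apply Rmult_le_pos|]; lra).
      assert (0 <= lam k * e1 * (Th t1 + 4 * KT)) by (apply Rmult_le_pos; [apply Rmult_le_pos|]; lra).
      assert (0 <= (mu k + d) * e1) by (apply Rmult_le_pos; lra).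
      assert (gamma * I k t1 >= - gamma * e1) by nra.
      assert (eta * Q k t1 >= - eta * e1) by nra.
      assert (omega * V k t1 >= - omega * e1) by nra.
      assert (0 <= (rsum n lam * KT - lam k * KT) * e1) by (apply Rmult_le_pos; lra).
      assert (0 <= rsum n mu * e1) by (apply Rmult_le_pos; lra).
      assert (0 <= beta * e1) by (apply Rmult_le_pos; lra).
      lra.
    - destruct (Rle_dec (V k t1 + e t1) 0) as [Hz|]; [|lra]. exfalso.
      assert (Hz' : V k t1 = - e1) by (fold e1 in Hz; lra).
      pose proof (Cr (fun s => V k s + e s) _ (dpl_plus (V k) e _ _ _ (dpV k t1 Hk Ht1p) (de t1))
        ltac:(simpl; fold e1; lra) ltac:(intros s Hs0; apply Hbef; auto)) as C.
      rewrite Hde, Hz', HMM in C.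
      assert (0 <= lam k * KT * e1) by (apply Rmult_le_pos; [apply Rmult_le_pos|]; lra).
      assert (0 <= delta * lam k * e1 * (Th t1 + 4 * KT)) by (apply Rmult_le_pos; [apply Rmult_le_pos; [apply Rmult_le_pos|]|]; lra).
      assert (0 <= (1 - delta) * lam k * e1 * (4 * KT)) by (apply Rmult_le_pos; [apply Rmult_le_pos; [apply Rmult_le_pos|]|]; lra).
      assert (0 <= (d + omega) * e1) by (apply Rmult_le_pos; lra).
      assert (mu k * S k t1 >= - mu k * e1) by nra.
      assert (0 <= (rsum n lam * KT - lam k * KT) * e1) by (apply Rmult_le_pos; lra).
      assert (0 <= (rsum n mu - mu k) * e1) by (apply Rmult_le_pos; lra).
      assert (0 <= (gamma + eta + omega + beta) * e1) by (apply Rmult_le_pos; lra).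
      assert (0 <= rsum n lam * KT * e1) by (apply Rmult_le_pos; nra).
      nra.
    - destruct (Rle_dec (I k t1 + e t1) 0) as [Hz|]; [|lra]. exfalso.
      assert (Hz' : I k t1 = - e1) by (fold e1 in Hz; lra).
      pose proof (Cr (fun s => I k s + e s) _ (dpl_plus (I k) e _ _ _ (dpI k t1 Hk Ht1p) (de t1))
        ltac:(simpl; fold e1; lra) ltac:(intros s Hs0; apply Hbef; auto)) as C.
      rewrite Hde, Hz', HMM in C.
      assert (0 <= lam k * KT * e1) by (apply Rmult_le_pos; [apply Rmult_le_pos|]; lra).
      assert (P1 : - ((4 * KT + 4 * KT) * e1) <= S k t1 * Th t1).
      { apply prod_lb; try lra. apply Rabs_le; lra. }
      assert (P2 : - ((4 * KT + 4 * KT) * e1) <= V k t1 * Th t1).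
      { apply prod_lb; try lra. apply Rabs_le; lra. }
      assert (Q1 : lam k * (- ((4 * KT + 4 * KT) * e1)) <= lam k * (S k t1 * Th t1)) by (apply Rmult_le_compat_l; lra).
      assert (Q2 : delta * lam k * (- ((4 * KT + 4 * KT) * e1)) <= delta * lam k * (V k t1 * Th t1)).
      { apply Rmult_le_compat_l; [apply Rmult_le_pos|]; lra. }
      assert (0 <= (1 - delta) * lam k * (8 * KT * e1)) by (apply Rmult_le_pos; [apply Rmult_le_pos|]; nra).
      assert (0 <= (gamma + beta + d) * e1) by (apply Rmult_le_pos; lra).
      assert (0 <= (rsum n lam * KT - lam k * KT) * e1) by (apply Rmult_le_pos; lra).
      assert (0 <= rsum n mu * e1) by (apply Rmult_le_pos; [apply rsum_nonneg; intros; left; apply Hmu; auto | lra]).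
      assert (0 <= (gamma + eta + omega + beta) * e1) by (apply Rmult_le_pos; lra).
      nra.
    - destruct (Rle_dec (Q k t1 + e t1) 0) as [Hz|]; [|lra]. exfalso.
      assert (Hz' : Q k t1 = - e1) by (fold e1 in Hz; lra).
      pose proof (Cr (fun s => Q k s + e s) _ (dpl_plus (Q k) e _ _ _ (dpQ k t1 Hk Ht1p) (de t1))
        ltac:(simpl; fold e1; lra) ltac:(intros s Hs0; apply Hbef; auto)) as C.
      rewrite Hde, Hz', HMM in C.
      assert (0 <= lam k * KT * e1) by (apply Rmult_le_pos; [apply Rmult_le_pos|]; lra).
      assert (beta * I k t1 >= - beta * e1) by nra.
      assert (0 <= (eta + d) * e1) by (apply Rmult_le_pos; lra).
      assert (0 <= rsum n lam * KT * e1) by (apply Rmult_le_pos; [apply Rmult_le_pos; [apply rsum_nonneg; intros; left; apply Hlam; auto|lra]|lra]).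
      assert (0 <= rsum n mu * e1) by (apply Rmult_le_pos; [apply rsum_nonneg; intros; left; apply Hmu; auto | lra]).
      assert (0 <= (gamma + eta + omega) * e1) by (apply Rmult_le_pos; lra).
      nra. }
  destruct (Rle_dec T t1) as [HTt|HTt].
  - assert (t1 = T) by lra. subst t1. exact Hs.
  - exfalso. destruct (nb_all t1 Ht10 Hs) as [del [Hdel Hn0]].
    set (t' := Rmin (t1 + del / 2) T).
    assert (Hm1 : t' <= t1 + del / 2) by apply Rmin_l. assert (Hm2 : t' <= T) by apply Rmin_r.
    assert (Hm3 : t1 < t') by (apply Rmin_glb_lt; lra).
    assert (A t').
    { split; [lra|]. intros s Hs0 k Hk. destruct (Rlt_le_dec s t1).
      - apply Hbef; auto. lra.
      - apply Hn0; auto. lra. }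
    specialize (Hub t' H). lra.
Qed.

End PosEps.

Lemma pos_all t k : 0 <= t -> (1 <= k <= n)%nat ->
  0 <= S k t /\ 0 <= V k t /\ 0 <= I k t /\ 0 <= Q k t.
Proof.
  intros Ht Hk. destruct (Req_dec t 0) as [->|Hne].
  { destruct (Hinit k Hk) as [h1 [h2 [h3 [h4 _]]]]. auto. }
  assert (Htp : 0 < t) by lra.
  assert (Key : forall X : R, (forall eps, 0 < eps -> eps * exp (MM * t) <= 1 -> 0 < X + eps * exp (MM * t)) -> 0 <= X).
  { intros X HX. destruct (Rle_dec 0 X) as [|Hn0]; auto. exfalso.
    set (u := exp (- MM * t)).
    assert (Hu : u * exp (MM * t) = 1) by (unfold u; rewrite <- exp_plus; replace (- MM * t + MM * t) with 0 by ring; apply exp_0).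
    assert (Hup : 0 < u) by apply exp_pos.
    set (ep := Rmin u (- X / 2 * u)).
    assert (E1 : ep <= u) by apply Rmin_l. assert (E2 : ep <= - X / 2 * u) by apply Rmin_r.
    assert (E3 : 0 < ep) by (apply Rmin_pos; nra).
    pose proof (exp_pos (MM * t)).
    assert (ep * exp (MM * t) <= 1) by nra.
    specialize (HX ep E3 H0).
    assert (ep * exp (MM * t) <= - X / 2) by nra. lra. }
  repeat split; apply Key; intros ep Hep Hep1; apply (pos_eps t ep Htp Hep Hep1 k Hk).
Qed.


Lemma Th_nn t : 0 <= t -> 0 <= Th t.
Proof.
  intros Ht. pose proof ka_pos. unfold Theta. apply Rmult_le_pos. left; apply Rinv_0_lt_compat; auto.
  apply rsum_nonneg. intros k Hk. apply Rmult_le_pos. left; apply Rmult_lt_0_compat; auto.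
  apply (pos_all t k Ht Hk).
Qed.

Local Notation Sd := (Sdfe b d Phi mu omega).
Local Notation Vd := (Vdfe b d Phi mu omega).

Lemma S_bound k t : (1 <= k <= n)%nat -> 0 <= t ->
  S k t <= Sd k + (S k 0 - Sd k) * exp (- (mu k + d + omega) * (t - 0)).
Proof.
  intros Hk Ht. pose proof (Hmu k Hk).
  assert (E : Sd k = (d + omega) * Ns k / (mu k + d + omega)) by (unfold Sdfe; f_equal; ring).
  rewrite E. apply (cmp_up (S k) (fun s => dS k s)); auto. lra.
  - intros s Hs. apply dpS; auto.
  - intros s Hs. destruct (pos_all s k ltac:(lra) Hk) as [h1 [h2 [h3 h4]]].
    pose proof (N_const k s Hk ltac:(lra)). pose proof (Th_nn s ltac:(lra)).
    rewrite (Lam_eq k Hk). subst eta.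
    assert (0 <= (omega - gamma) * (I k s + Q k s)) by (apply Rmult_le_pos; lra).
    assert (0 <= lam k * S k s * Th s) by (apply Rmult_le_pos; [apply Rmult_le_pos|]; auto; left; auto).
    nra.
  - apply rcS; auto; lra.
Qed.

Lemma Y_bound k t : (1 <= k <= n)%nat -> 0 <= t ->
  S k t + delta * V k t <= Sd k + delta * Vd k + Rabs (S k 0 - Sd k) * exp (- (d + omega) * t).
Proof.
  intros Hk Ht. pose proof (S_bound k t Hk Ht). pose proof (Hmu k Hk).
  destruct (pos_all t k Ht Hk) as [h1 [h2 [h3 h4]]].
  pose proof (N_const k t Hk Ht). pose proof (SV_sum k Hk).
  assert (Ee : exp (- (mu k + d + omega) * (t - 0)) <= exp (- (d + omega) * t)).
  { destruct (Req_dec t 0) as [->|]. right; f_equal; ring. left. apply exp_increasing. nra. }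
  pose proof (exp_pos (- (mu k + d + omega) * (t - 0))).
  pose proof (Rle_abs (S k 0 - Sd k)). pose proof (Rabs_pos (S k 0 - Sd k)).
  assert (X : S k t - Sd k <= Rabs (S k 0 - Sd k) * exp (- (d + omega) * t)).
  { assert ((S k 0 - Sd k) * exp (- (mu k + d + omega) * (t - 0)) <=
            Rabs (S k 0 - Sd k) * exp (- (mu k + d + omega) * (t - 0))) by (apply Rmult_le_compat_r; lra).
    assert (Rabs (S k 0 - Sd k) * exp (- (mu k + d + omega) * (t - 0)) <=
            Rabs (S k 0 - Sd k) * exp (- (d + omega) * t)) by (apply Rmult_le_compat_l; lra).
    lra. }
  pose proof (exp_pos (- (d + omega) * t)).
  assert (0 <= Rabs (S k 0 - Sd k) * exp (- (d + omega) * t)) by (apply Rmult_le_pos; lra).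
  assert (delta * V k t <= delta * (Ns k - S k t)) by (apply Rmult_le_compat_l; lra).
  destruct (Rle_dec (S k t) (Sd k)).
  - assert (0 <= (1 - delta) * (Sd k - S k t)) by (apply Rmult_le_pos; lra). nra.
  - assert (0 <= delta * (S k t - Sd k)) by (apply Rmult_le_pos; lra). nra.
Qed.

Definition DD := / kavg n p * rsum n (fun i => lam i * phi i * p i * Rabs (S i 0 - Sd i)).
Local Notation cc := (gamma + beta + d).
Local Notation RR := (R0_SVIQS n p b d Phi lam phi mu beta gamma omega delta).

Lemma DD_nn : 0 <= DD.
Proof.
  pose proof ka_pos. unfold DD. apply Rmult_le_pos. left; apply Rinv_0_lt_compat; auto.
  apply rsum_nonneg. intros k Hk. apply Rmult_le_pos. 
  left; repeat apply Rmult_lt_0_compat; auto. apply Rabs_pos.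
Qed.

Lemma Th_deriv t : 0 < t ->
  / kavg n p * rsum n (fun i => phi i * p i * dI i t) <=
  Th t * (cc * RR - cc + DD * exp (- (d + omega) * t)).
Proof.
  intros Ht. pose proof ka_pos.
  rewrite (rsum_eq n _ (fun i => Th t * (lam i * phi i * p i * (S i t + delta * V i t)) - cc * (phi i * p i * I i t)))
    by (intros; ring).
  rewrite rsum_minus, !rsum_scal.
  assert (E : / kavg n p * (Th t * rsum n (fun i => lam i * phi i * p i * (S i t + delta * V i t)) -
     cc * rsum n (fun i => phi i * p i * I i t)) =
     Th t * (/ kavg n p * rsum n (fun i => lam i * phi i * p i * (S i t + delta * V i t))) - cc * Th t)
    by (unfold Theta; ring).
  rewrite E.
  assert (B : / kavg n p * rsum n (fun i => lam i * phi i * p i * (S i t + delta * V i t)) <=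
              cc * RR + DD * exp (- (d + omega) * t)).
  { assert (Eq : cc * RR + DD * exp (- (d + omega) * t) = / kavg n p * rsum n (fun i =>
       lam i * phi i * p i * (Sd i + delta * Vd i) +
       exp (- (d + omega) * t) * (lam i * phi i * p i * Rabs (S i 0 - Sd i)))).
    { rewrite cR0, rsum_plus, rsum_scal. unfold DD. ring. }
    rewrite Eq.
    apply Rmult_le_compat_l. left; apply Rinv_0_lt_compat; auto.
    apply rsum_le. intros k Hk.
    pose proof (Y_bound k t Hk ltac:(lra)).
    assert (0 <= lam k * phi k * p k) by (left; repeat apply Rmult_lt_0_compat; auto).
    apply Rmult_le_compat_l with (r := lam k * phi k * p k) in H0; auto.
    lra. }
  pose proof (Th_nn t ltac:(lra)).
  apply Rmult_le_compat_l with (r := Th t) in B; auto. lra.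
Qed.

Definition alpha := cc * (1 - RR) / 2.

Lemma Th_decay a : RR < 1 -> 0 <= a -> DD * exp (- (d + omega) * a) <= alpha ->
  forall t, a <= t -> Th t <= 0 / alpha + (Th a - 0 / alpha) * exp (- alpha * (t - a)).
Proof.
  intros HR Ha Hda. assert (Hal : 0 < alpha) by (unfold alpha; apply Rdiv_lt_0_compat; [apply Rmult_lt_0_compat|]; lra).
  apply (cmp_up Th (fun s => / kavg n p * rsum n (fun i => phi i * p i * dI i s))); auto.
  - intros s Hs. apply dpTh. lra.
  - intros s Hs. pose proof (Th_deriv s ltac:(lra)). pose proof (Th_nn s ltac:(lra)).
    assert (DD * exp (- (d + omega) * s) <= DD * exp (- (d + omega) * a)).
    { apply Rmult_le_compat_l. apply DD_nn. left; apply exp_increasing. nra. }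
    assert (Th s * (cc * RR - cc + DD * exp (- (d + omega) * s)) <= Th s * (- alpha)).
    { apply Rmult_le_compat_l; auto. unfold alpha in *. lra. }
    lra.
  - apply rcTh; auto.
Qed.


Local Notation rV k := (mu k + d + omega).

Lemma dI_le k t th : (1 <= k <= n)%nat -> 0 < t -> Th t <= th ->
  dI k t <= lam k * Ns k * th - cc * I k t.
Proof.
  intros Hk Ht Hth. destruct (pos_all t k ltac:(lra) Hk) as [h1 [h2 [h3 h4]]].
  pose proof (N_const k t Hk ltac:(lra)). pose proof (Th_nn t ltac:(lra)). pose proof (Hlam k Hk).
  assert (0 <= S k t + delta * V k t <= Ns k).
  { assert (0 <= delta * V k t) by (apply Rmult_le_pos; lra). assert (delta * V k t <= 1 * V k t) by (apply Rmult_le_compat_r; lra). split; lra. }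
  assert (lam k * S k t * Th t + delta * lam k * V k t * Th t = lam k * ((S k t + delta * V k t) * Th t)) by ring.
  assert ((S k t + delta * V k t) * Th t <= Ns k * th).
  { apply Rmult_le_compat; lra. }
  assert (lam k * ((S k t + delta * V k t) * Th t) <= lam k * (Ns k * th)) by (apply Rmult_le_compat_l; lra).
  lra.
Qed.

Lemma dQ_le k t ib : (1 <= k <= n)%nat -> 0 < t -> I k t <= ib ->
  dQ k t <= beta * ib - (eta + d) * Q k t.
Proof. intros. nra. Qed.

Lemma dV_le k t : (1 <= k <= n)%nat -> 0 < t ->
  dV k t <= mu k * Ns k - rV k * V k t.
Proof.
  intros Hk Ht. destruct (pos_all t k ltac:(lra) Hk) as [h1 [h2 [h3 h4]]].
  pose proof (N_const k t Hk ltac:(lra)). pose proof (Th_nn t ltac:(lra)). pose proof (Hlam k Hk).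
  pose proof (Hmu k Hk).
  assert (0 <= delta * lam k * V k t * Th t) by (apply Rmult_le_pos; [apply Rmult_le_pos; [apply Rmult_le_pos|]|]; lra).
  assert (mu k * S k t <= mu k * (Ns k - V k t)) by (apply Rmult_le_compat_l; lra).
  lra.
Qed.

Lemma dV_ge k t ib qb th : (1 <= k <= n)%nat -> 0 < t -> I k t <= ib -> Q k t <= qb -> Th t <= th ->
  mu k * Ns k - mu k * (ib + qb) - delta * lam k * Ns k * th - rV k * V k t <= dV k t.
Proof.
  intros Hk Ht Hi Hq Hth. destruct (pos_all t k ltac:(lra) Hk) as [h1 [h2 [h3 h4]]].
  pose proof (N_const k t Hk ltac:(lra)). pose proof (Th_nn t ltac:(lra)). pose proof (Hlam k Hk).
  pose proof (Hmu k Hk).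
  assert (V k t * Th t <= Ns k * th) by (apply Rmult_le_compat; lra).
  assert (delta * lam k * (V k t * Th t) <= delta * lam k * (Ns k * th)) by (apply Rmult_le_compat_l; nra).
  assert (mu k * (I k t + Q k t) <= mu k * (ib + qb)) by (apply Rmult_le_compat_l; lra).
  nra.
Qed.

End Sol.

Local Notation Ns := (Nstar b d Phi).
Local Notation Sd := (Sdfe b d Phi mu omega).
Local Notation Vd := (Vdfe b d Phi mu omega).
Local Notation cc := (gamma + beta + d).
Local Notation RR := (R0_SVIQS n p b d Phi lam phi mu beta gamma omega delta).
Local Notation rV k := (mu k + d + omega).

Lemma Vd_eq k : (1 <= k <= n)%nat -> Vd k = mu k * Ns k / rV k.
Proof. intros Hk. pose proof (Hmu k Hk). unfold Vdfe. field. lra. Qed.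

Lemma rmax_le x y z : x <= z -> y <= z -> Rmax x y <= z.
Proof. intros; apply Rmax_lub; auto. Qed.

Lemma lyap (HR : RR < 1) : forall eps, 0 < eps -> exists dl, 0 < dl /\
     forall S V I Q : nat -> R -> R,
       SVIQS_sol n p b d Phi lam phi mu beta gamma eta omega delta S V I Q ->
       feasible_init n b d Phi S V I Q ->
       (forall k, (1 <= k <= n)%nat ->
          Rabs (S k 0 - Sd k) < dl /\
          Rabs (V k 0 - Vd k) < dl /\
          Rabs (I k 0) < dl /\ Rabs (Q k 0) < dl) ->
       forall t, 0 <= t -> forall k, (1 <= k <= n)%nat ->
          Rabs (S k t - Sd k) < eps /\
          Rabs (V k t - Vd k) < eps /\
          Rabs (I k t) < eps /\ Rabs (Q k t) < eps.
Proof.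
  intros eps Heps.
  pose proof ka_pos as Hka. pose proof KT_pos as HKT.
  assert (Hal : 0 < alpha) by (unfold alpha; apply Rdiv_lt_0_compat; [apply Rmult_lt_0_compat|]; lra).
  set (Kl := / kavg n p * rsum n (fun i => lam i * phi i * p i)).
  assert (HKl : 0 < Kl).
  { unfold Kl. apply Rmult_lt_0_compat. apply Rinv_0_lt_compat; auto.
    apply rsum_pos; auto. intros; repeat apply Rmult_lt_0_compat; auto. }
  set (LN := rsum n (fun k => lam k * Ns k)).
  assert (HLNk : forall k, (1 <= k <= n)%nat -> lam k * Ns k <= LN).
  { intros k Hk. unfold LN. apply (rsum_term n (fun k => lam k * Ns k)); auto. intros j Hj. pose proof (Hlam j Hj). pose proof (Ns_pos j Hj). nra. }
  assert (HLN : 0 <= LN) by (apply rsum_nonneg; intros j Hj; pose proof (Hlam j Hj); pose proof (Ns_pos j Hj); nra).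
  assert (Hcc : 0 < cc) by lra.
  set (a1 := LN * KT / cc + 1).
  set (a2 := beta * a1 / (eta + d) + 1).
  set (a3 := a1 + a2 + LN * KT / (d + omega) + 1).
  set (a4 := a3 + a1 + a2).
  assert (Ha1 : 1 <= a1) by (unfold a1; assert (0 <= LN * KT / cc) by (apply Rdiv_le_0_compat; nra); lra).
  assert (Ha2 : 1 <= a2) by (unfold a2; assert (0 <= beta * a1 / (eta + d)) by (apply Rdiv_le_0_compat; nra); lra).
  assert (Ha3 : 1 <= a3) by (unfold a3; assert (0 <= LN * KT / (d + omega)) by (apply Rdiv_le_0_compat; nra); lra).
  assert (Ha4 : 1 <= a4) by (unfold a4; lra).
  set (Cm := a1 + a2 + a3 + a4).
  assert (HCm0 : 0 < Cm) by (unfold Cm; lra).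
  set (dl := Rmin (eps / (Cm + 1)) (alpha / (Kl + 1))).
  assert (Hdl1 : dl <= eps / (Cm + 1)) by apply Rmin_l.
  assert (Hdl2 : dl <= alpha / (Kl + 1)) by apply Rmin_r.
  assert (Hdl : 0 < dl) by (apply Rmin_pos; apply Rdiv_lt_0_compat; lra).
  assert (HCm : Cm * dl < eps).
  { assert ((Cm + 1) * dl <= eps).
    { apply Rmult_le_compat_l with (r := Cm + 1) in Hdl1; [|lra].
      replace ((Cm + 1) * (eps / (Cm + 1))) with eps in Hdl1 by (field; lra). exact Hdl1. }
    lra. }
  assert (HKdl : Kl * dl <= alpha).
  { apply Rmult_le_compat_l with (r := Kl) in Hdl2; [|lra].
    assert (Kl * (alpha / (Kl + 1)) <= alpha).
    { replace (Kl * (alpha / (Kl + 1))) with (alpha * (Kl / (Kl + 1))) by (field; lra).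
      assert (Kl / (Kl + 1) <= 1).
      { apply Rmult_le_reg_r with (Kl + 1). lra. unfold Rdiv. rewrite Rmult_assoc, Rinv_l by lra. lra. }
      nra. }
    lra. }
  exists dl. split; auto.
  intros S V I Q Hsol Hinit Hclose t Ht k Hk.
  assert (HDD : DD S <= Kl * dl).
  { unfold DD, Kl.
    replace (/ kavg n p * rsum n (fun i => lam i * phi i * p i) * dl) with
      (/ kavg n p * rsum n (fun i => lam i * phi i * p i * dl))
      by (rewrite (rsum_eq n (fun i => lam i * phi i * p i * dl) (fun i => dl * (lam i * phi i * p i))) by (intros; ring);
          rewrite rsum_scal; ring).
    apply Rmult_le_compat_l. left; apply Rinv_0_lt_compat; auto.
    apply rsum_le. intros i Hi. apply Rmult_le_compat_l.
    left; repeat apply Rmult_lt_0_compat; auto. left; apply Hclose; auto. }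
  assert (HThd : forall s, 0 <= s -> Theta n p phi I s <= Theta n p phi I 0).
  { intros s Hs.
    pose proof (Th_decay S V I Q Hsol Hinit 0 HR ltac:(lra)) as Hd0.
    assert (DD S * exp (- (d + omega) * 0) <= alpha).
    { replace (- (d + omega) * 0) with 0 by ring. rewrite exp_0. lra. }
    specialize (Hd0 H s Hs).
    replace (0 / alpha) with 0 in Hd0 by (field; lra).
    pose proof (Th_nn S V I Q Hsol Hinit 0 ltac:(lra)).
    pose proof (exp_pos (- alpha * (s - 0))). pose proof (exp_neg_le1 alpha (s - 0) ltac:(lra) ltac:(lra)).
    nra. }
  assert (HTh0 : Theta n p phi I 0 <= KT * dl).
  { unfold Theta, KT.
    replace (/ kavg n p * rsum n (fun i => phi i * p i) * dl) with
      (/ kavg n p * rsum n (fun i => phi i * p i * dl))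
      by (rewrite (rsum_eq n (fun i => phi i * p i * dl) (fun i => dl * (phi i * p i))) by (intros; ring);
          rewrite rsum_scal; ring).
    apply Rmult_le_compat_l. left; apply Rinv_0_lt_compat; auto.
    apply rsum_le. intros i Hi. apply Rmult_le_compat_l.
    left; repeat apply Rmult_lt_0_compat; auto.
    destruct (Hclose i Hi) as [_ [_ [HI _]]]. pose proof (Rle_abs (I i 0)). lra. }
  pose proof (Th_nn S V I Q Hsol Hinit 0 ltac:(lra)) as HTh0n.
  destruct (Hclose k Hk) as [cS [cV [cI cQ]]].
  destruct (pos_all S V I Q Hsol Hinit 0 k ltac:(lra) Hk) as [p1 [p2 [p3 p4]]].
  pose proof (Hlam k Hk). pose proof (Hmu k Hk). pose proof (Ns_pos k Hk).
  pose proof (HLNk k Hk).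
  assert (HIall : forall s0, 0 <= s0 -> I k s0 <= a1 * dl).
  { intros s0 Hs0.
    pose proof (cmp_max (I k) (fun s => lam k * S k s * Theta n p phi I s + delta * lam k * V k s * Theta n p phi I s - cc * I k s)
      cc (lam k * Ns k * Theta n p phi I 0) 0 Hcc) as C.
    assert (C' : I k s0 <= Rmax (lam k * Ns k * Theta n p phi I 0 / cc) (I k 0)).
    { apply C; auto.
      - intros s Hs. apply (dpI S V I Q Hsol); auto.
      - intros s Hs. apply (dI_le S V I Q Hsol Hinit); auto. apply HThd; lra.
      - apply (rcI S V I Q Hsol); auto; lra. }
    assert (lam k * Ns k * Theta n p phi I 0 <= LN * (KT * dl)) by (apply Rmult_le_compat; nra).
    assert (lam k * Ns k * Theta n p phi I 0 / cc <= LN * KT / cc * dl).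
    { unfold Rdiv. replace (LN * KT * / cc * dl) with (LN * (KT * dl) * / cc) by ring.
      apply Rmult_le_compat_r; auto. left; apply Rinv_0_lt_compat; auto. }
    assert (I k 0 <= dl) by (rewrite Rabs_right in cI; lra).
    assert (Rmax (lam k * Ns k * Theta n p phi I 0 / cc) (I k 0) <= a1 * dl).
    { assert (0 <= (a1 - 1) * dl) by (apply Rmult_le_pos; lra).
      apply rmax_le; unfold a1 in *; lra. }
    lra. }
  assert (HQall : forall s0, 0 <= s0 -> Q k s0 <= a2 * dl).
  { intros s0 Hs0.
    assert (Hed : 0 < eta + d) by lra.
    pose proof (cmp_max (Q k) (fun s => beta * I k s - (eta + d) * Q k s)
      (eta + d) (beta * (a1 * dl)) 0 Hed) as C.
    assert (C' : Q k s0 <= Rmax (beta * (a1 * dl) / (eta + d)) (Q k 0)).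
    { apply C; auto.
      - intros s Hs. apply (dpQ S V I Q Hsol); auto.
      - intros s Hs. apply (dQ_le I Q); auto. apply HIall; lra.
      - apply (rcQ S V I Q Hsol); auto; lra. }
    assert (Q k 0 <= dl) by (rewrite Rabs_right in cQ; lra).
    assert (Rmax (beta * (a1 * dl) / (eta + d)) (Q k 0) <= a2 * dl).
    { assert (0 <= (a2 - 1) * dl) by (apply Rmult_le_pos; lra).
      assert (beta * (a1 * dl) / (eta + d) = beta * a1 / (eta + d) * dl) by (field; lra).
      apply rmax_le; unfold a2 in *; lra. }
    lra. }
  assert (HrV : 0 < rV k) by lra.
  assert (HVup : V k t <= Vd k + a3 * dl).
  { pose proof (cmp_max (V k) (fun s => mu k * S k s - delta * lam k * V k s * Theta n p phi I s - (d + omega) * V k s)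
      (rV k) (mu k * Ns k) 0 HrV) as C.
    assert (C' : V k t <= Rmax (mu k * Ns k / rV k) (V k 0)).
    { apply C; auto.
      - intros s Hs. apply (dpV S V I Q Hsol); auto.
      - intros s Hs. apply (dV_le S V I Q Hsol Hinit); auto.
      - apply (rcV S V I Q Hsol); auto; lra. }
    rewrite <- Vd_eq in C' by auto.
    pose proof (Rle_abs (V k 0 - Vd k)).
    assert (0 <= (a3 - 1) * dl) by (apply Rmult_le_pos; lra).
    assert (Rmax (Vd k) (V k 0) <= Vd k + a3 * dl) by (apply rmax_le; lra).
    lra. }
  assert (HVlo : Vd k - a3 * dl <= V k t).
  { set (th := Theta n p phi I 0).
    pose proof (cmp_min (V k) (fun s => mu k * S k s - delta * lam k * V k s * Theta n p phi I s - (d + omega) * V k s)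
      (rV k) (mu k * Ns k - mu k * (a1 * dl + a2 * dl) - delta * lam k * Ns k * th) 0 HrV) as C.
    assert (C' : Rmin ((mu k * Ns k - mu k * (a1 * dl + a2 * dl) - delta * lam k * Ns k * th) / rV k) (V k 0) <= V k t).
    { apply C; auto.
      - intros s Hs. apply (dpV S V I Q Hsol); auto.
      - intros s Hs. apply (dV_ge S V I Q Hsol Hinit); auto. apply HIall; lra. apply HQall; lra. apply HThd; lra.
      - apply (rcV S V I Q Hsol); auto; lra. }
    pose proof (Rle_abs (- (V k 0 - Vd k))). rewrite Rabs_Ropp in H3.
    assert (Hx : Vd k - a3 * dl <= (mu k * Ns k - mu k * (a1 * dl + a2 * dl) - delta * lam k * Ns k * th) / rV k).
    { rewrite (Vd_eq k Hk).
      apply Rmult_le_reg_r with (rV k); auto.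
      unfold Rdiv. rewrite Rmult_minus_distr_r, !Rmult_assoc, !Rinv_l by lra. rewrite !Rmult_1_r.
      assert (mu k * (a1 * dl + a2 * dl) <= rV k * (a1 * dl + a2 * dl)) by (apply Rmult_le_compat_r; nra).
      assert (HDL : delta * lam k * Ns k * th <= LN * KT * dl).
      { assert (0 <= lam k * Ns k) by nra. assert (0 <= (1 - delta) * (lam k * Ns k)) by (apply Rmult_le_pos; lra).
        assert (delta * (lam k * Ns k) <= lam k * Ns k) by lra.
        assert (0 <= delta * (lam k * Ns k)) by (apply Rmult_le_pos; nra).
        assert (delta * (lam k * Ns k) * th <= LN * (KT * dl)) by (apply Rmult_le_compat; [lra|unfold th; lra|lra|unfold th; lra]).
        nra. }
      assert (LN * KT * dl <= rV k * (LN * KT / (d + omega) * dl)).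
      { replace (rV k * (LN * KT / (d + omega) * dl)) with ((rV k / (d + omega)) * (LN * KT * dl)) by (field; lra).
        assert (1 <= rV k / (d + omega)).
        { apply Rmult_le_reg_r with (d + omega). lra. unfold Rdiv. rewrite Rmult_assoc, Rinv_l by lra. lra. }
        assert (0 <= LN * KT * dl) by (apply Rmult_le_pos; nra). nra. }
      assert (0 <= rV k * dl) by nra.
      unfold a3. nra. }
    assert (Vd k - a3 * dl <= V k 0).
    { assert (0 <= (a3 - 1) * dl) by (apply Rmult_le_pos; lra). lra. }
    assert (Vd k - a3 * dl <= Rmin ((mu k * Ns k - mu k * (a1 * dl + a2 * dl) - delta * lam k * Ns k * th) / rV k) (V k 0))
      by (apply Rmin_glb; auto).
    lra. }
  destruct (pos_all S V I Q Hsol Hinit t k Ht Hk) as [q1 [q2 [q3 q4]]].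
  pose proof (N_const S V I Q Hsol Hinit k t Hk Ht). pose proof (SV_sum k Hk).
  pose proof (HIall t Ht). pose proof (HQall t Ht).
  assert (0 <= a1 * dl) by (apply Rmult_le_pos; lra).
  assert (0 <= a2 * dl) by (apply Rmult_le_pos; lra).
  assert (0 <= a3 * dl) by (apply Rmult_le_pos; lra).
  assert (HCm' : a1 * dl + a2 * dl + a3 * dl + a4 * dl < eps) by (unfold Cm in HCm; lra).
  assert (a4 * dl = a3 * dl + a1 * dl + a2 * dl) by (unfold a4; ring).
  repeat split.
  - apply Rabs_def1; lra.
  - apply Rabs_def1; lra.
  - rewrite Rabs_right; lra.
  - rewrite Rabs_right; lra.
Qed.


Lemma attr (HR : RR < 1) : forall S V I Q : nat -> R -> R,
     SVIQS_sol n p b d Phi lam phi mu beta gamma eta omega delta S V I Q ->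
     feasible_init n b d Phi S V I Q ->
     forall k, (1 <= k <= n)%nat ->
     forall eps, 0 < eps -> exists T, forall t, T <= t ->
        Rabs (S k t - Sd k) < eps /\
        Rabs (V k t - Vd k) < eps /\
        Rabs (I k t) < eps /\ Rabs (Q k t) < eps.
Proof.
  intros S V I Q Hsol Hinit k Hk eps Heps.
  pose proof ka_pos as Hka. pose proof KT_pos as HKT.
  assert (Hal : 0 < alpha) by (unfold alpha; apply Rdiv_lt_0_compat; [apply Rmult_lt_0_compat|]; lra).
  assert (Hcc : 0 < cc) by lra.
  pose proof (Hlam k Hk). pose proof (Hmu k Hk). pose proof (Ns_pos k Hk).
  assert (HlN : 0 < lam k * Ns k) by nra.
  assert (HrV : 0 < rV k) by lra.
  assert (ThE : forall x, 0 < x -> exists T, 0 <= T /\ forall t, T <= t -> Theta n p phi I t <= x).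
  { intros x Hx.
    destruct (exp_small (DD S) (d + omega) alpha 0 ltac:(lra) Hal) as [T1 [HT1 HT1b]].
    specialize (HT1b T1 (Rle_refl _)).
    pose proof (DD_nn S). rewrite Rabs_right in HT1b by lra. rewrite Rminus_0_r in HT1b.
    pose proof (Th_decay S V I Q Hsol Hinit T1 HR HT1 HT1b) as Hdec.
    destruct (exp_small (Theta n p phi I T1) alpha x T1 Hal Hx) as [T2 [HT2 HT2b]].
    exists T2. split. lra. intros t Ht.
    specialize (Hdec t ltac:(lra)). specialize (HT2b t Ht).
    replace (0 / alpha) with 0 in Hdec by (field; lra).
    pose proof (Rle_abs (Theta n p phi I T1)). pose proof (exp_pos (- alpha * (t - T1))).
    nra. }
  assert (IE : forall x, 0 < x -> exists T, 0 <= T /\ forall t, T <= t -> I k t <= x).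
  { intros x Hx. set (th := x * cc / (2 * (lam k * Ns k))).
    assert (Hth : 0 < th) by (unfold th; apply Rdiv_lt_0_compat; nra).
    destruct (ThE th Hth) as [T [HT HTb]].
    destruct (ev_up (I k) (fun s => lam k * S k s * Theta n p phi I s + delta * lam k * V k s * Theta n p phi I s - cc * I k s)
       cc (lam k * Ns k * th) T Hcc) with (x := x / 2) as [T' [HT' HT'b]].
    - intros s Hs. apply (dpI S V I Q Hsol); auto. lra.
    - intros s Hs. apply (dI_le S V I Q Hsol Hinit); auto. lra. apply HTb; lra.
    - apply (rcI S V I Q Hsol); auto.
    - lra.
    - exists T'. split. lra. intros t Ht. specialize (HT'b t Ht).
      replace (lam k * Ns k * th / cc) with (x / 2) in HT'b by (unfold th; field; lra). lra. }
  assert (QE : forall x, 0 < x -> exists T, 0 <= T /\ forall t, T <= t -> Q k t <= x).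
  { intros x Hx. set (ib := x * (eta + d) / (2 * beta)).
    assert (Hib : 0 < ib) by (unfold ib; apply Rdiv_lt_0_compat; nra).
    assert (Hed : 0 < eta + d) by lra.
    destruct (IE ib Hib) as [T [HT HTb]].
    destruct (ev_up (Q k) (fun s => beta * I k s - (eta + d) * Q k s)
       (eta + d) (beta * ib) T Hed) with (x := x / 2) as [T' [HT' HT'b]].
    - intros s Hs. apply (dpQ S V I Q Hsol); auto. lra.
    - intros s Hs. apply (dQ_le I Q); auto. lra. apply HTb; lra.
    - apply (rcQ S V I Q Hsol); auto.
    - lra.
    - exists T'. split. lra. intros t Ht. specialize (HT'b t Ht).
      replace (beta * ib / (eta + d)) with (x / 2) in HT'b by (unfold ib; field; lra). lra. }
  assert (VE : forall x, 0 < x -> exists T, 0 <= T /\ forall t, T <= t -> Vd k - x <= V k t <= Vd k + x).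
  { intros x Hx.
    destruct (ev_up (V k) (fun s => mu k * S k s - delta * lam k * V k s * Theta n p phi I s - (d + omega) * V k s)
       (rV k) (mu k * Ns k) 0 HrV) with (x := x) as [Tu [HTu HTub]].
    - intros s Hs. apply (dpV S V I Q Hsol); auto.
    - intros s Hs. apply (dV_le S V I Q Hsol Hinit); auto.
    - apply (rcV S V I Q Hsol); auto; lra.
    - lra.
    - destruct (IE (x / 4) ltac:(lra)) as [Ti [HTi HTib]].
      destruct (QE (x / 4) ltac:(lra)) as [Tq [HTq HTqb]].
      set (th := x * rV k / (4 * (lam k * Ns k))).
      assert (Hth : 0 < th) by (unfold th; apply Rdiv_lt_0_compat; nra).
      destruct (ThE th Hth) as [Tt [HTt HTtb]].
      set (Tm := Rmax Ti (Rmax Tq Tt)).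
      assert (HTm1 : Ti <= Tm) by apply Rmax_l.
      assert (HTm2 : Tq <= Tm) by (unfold Tm; eapply Rle_trans; [apply Rmax_l|apply Rmax_r]).
      assert (HTm3 : Tt <= Tm) by (unfold Tm; eapply Rle_trans; [apply Rmax_r|apply Rmax_r]).
      destruct (ev_lo (V k) (fun s => mu k * S k s - delta * lam k * V k s * Theta n p phi I s - (d + omega) * V k s)
         (rV k) (mu k * Ns k - mu k * (x / 4 + x / 4) - delta * lam k * Ns k * th) Tm HrV) with (x := x / 4)
         as [Tl [HTl HTlb]].
      + intros s Hs. apply (dpV S V I Q Hsol); auto. lra.
      + intros s Hs. apply (dV_ge S V I Q Hsol Hinit); auto. lra.
        apply HTib; lra. apply HTqb; lra. apply HTtb; lra.
      + apply (rcV S V I Q Hsol); auto. lra.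
      + lra.
      + exists (Rmax Tu Tl). split. apply Rle_trans with Tu; auto. apply Rmax_l.
        intros t Ht. pose proof (Rmax_l Tu Tl). pose proof (Rmax_r Tu Tl).
        specialize (HTub t ltac:(lra)). specialize (HTlb t ltac:(lra)).
        rewrite <- (Vd_eq k Hk) in HTub. split; [|lra].
        assert (Vd k - x <= (mu k * Ns k - mu k * (x / 4 + x / 4) - delta * lam k * Ns k * th) / rV k - x / 4).
        { rewrite (Vd_eq k Hk).
          assert (E : (mu k * Ns k - mu k * (x / 4 + x / 4) - delta * lam k * Ns k * th) / rV k =
                      mu k * Ns k / rV k - (mu k / rV k) * (x / 2) - delta * (x / 4)).
          { unfold th. field. split; lra. }
          rewrite E.
          assert (mu k / rV k <= 1).
          { apply Rmult_le_reg_r with (rV k). lra. unfold Rdiv. rewrite Rmult_assoc, Rinv_l by lra. lra. }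
          assert (0 <= mu k / rV k) by (apply Rdiv_le_0_compat; lra).
          assert ((mu k / rV k) * (x / 2) <= x / 2) by nra.
          assert (delta * (x / 4) <= x / 4) by nra.
          lra. }
        lra. }
  destruct (IE (eps / 4) ltac:(lra)) as [T1 [HT1 HT1b]].
  destruct (QE (eps / 4) ltac:(lra)) as [T2 [HT2 HT2b]].
  destruct (VE (eps / 4) ltac:(lra)) as [T3 [HT3 HT3b]].
  exists (Rmax T1 (Rmax T2 T3)). intros t Ht.
  pose proof (Rmax_l T1 (Rmax T2 T3)). pose proof (Rmax_r T1 (Rmax T2 T3)).
  pose proof (Rmax_l T2 T3). pose proof (Rmax_r T2 T3).
  specialize (HT1b t ltac:(lra)). specialize (HT2b t ltac:(lra)). specialize (HT3b t ltac:(lra)).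
  destruct (pos_all S V I Q Hsol Hinit t k ltac:(lra) Hk) as [q1 [q2 [q3 q4]]].
  pose proof (N_const S V I Q Hsol Hinit k t Hk ltac:(lra)). pose proof (SV_sum k Hk).
  repeat split.
  - apply Rabs_def1; lra.
  - apply Rabs_def1; lra.
  - rewrite Rabs_right; lra.
  - rewrite Rabs_right; lra.
Qed.

End Sys.

Theorem theorem4p8
  (n : nat) (p : nat -> R) (b d Phi : R)
  (lam phi mu : nat -> R) (beta gamma eta omega delta : R)
  (Hn : (1 <= n)%nat)
  (Hp : forall k, (1 <= k <= n)%nat -> 0 < p k)
  (Hpsum : rsum n p = 1)
  (Hd : 0 < d) (Hbd : d < b)
  (HPhi : 0 < Phi)
  (HPhieq : Phi = / kavg n p * rsum n (fun i => INR i * p i * b * Phi / (d + b * INR i * Phi)))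
  (Hlam : forall k, (1 <= k <= n)%nat -> 0 < lam k)
  (Hphi : forall k, (1 <= k <= n)%nat -> 0 < phi k)
  (Hmu : forall k, (1 <= k <= n)%nat -> 0 < mu k)
  (Hbeta : 0 < beta) (Hgamma : 0 < gamma) (Heta : 0 < eta) (Homega : 0 < omega)
  (Hdelta : 0 <= delta <= 1)
  (Hoe : eta <= omega) (Heg : eta = gamma)
  (HR0 : R0_SVIQS n p b d Phi lam phi mu beta gamma omega delta < 1) :
  (* Lyapunov stability of E^0 (among solutions with admissible initial data) *)
  (forall eps, 0 < eps -> exists dl, 0 < dl /\
     forall S V I Q : nat -> R -> R,
       SVIQS_sol n p b d Phi lam phi mu beta gamma eta omega delta S V I Q ->
       feasible_init n b d Phi S V I Q ->
       (forall k, (1 <= k <= n)%nat ->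
          Rabs (S k 0 - Sdfe b d Phi mu omega k) < dl /\
          Rabs (V k 0 - Vdfe b d Phi mu omega k) < dl /\
          Rabs (I k 0) < dl /\ Rabs (Q k 0) < dl) ->
       forall t, 0 <= t -> forall k, (1 <= k <= n)%nat ->
          Rabs (S k t - Sdfe b d Phi mu omega k) < eps /\
          Rabs (V k t - Vdfe b d Phi mu omega k) < eps /\
          Rabs (I k t) < eps /\ Rabs (Q k t) < eps)
  /\
  (* global attractivity *)
  (forall S V I Q : nat -> R -> R,
     SVIQS_sol n p b d Phi lam phi mu beta gamma eta omega delta S V I Q ->
     feasible_init n b d Phi S V I Q ->
     forall k, (1 <= k <= n)%nat ->
     forall eps, 0 < eps -> exists T, forall t, T <= t ->
        Rabs (S k t - Sdfe b d Phi mu omega k) < eps /\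
        Rabs (V k t - Vdfe b d Phi mu omega k) < eps /\
        Rabs (I k t) < eps /\ Rabs (Q k t) < eps).
Proof.
  split.
  - eapply lyap; eauto.
  - eapply attr; eauto.
Qed.
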